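(* Let $m\ge1$ and let $M$ be the $m\times m$ matrix with entries in $\mathbb{Q}[x,y,t]$ given by $M_{i,j}=\sum_{k=0}^{m}\binom{x-i}{k}\binom{y-j}{k}t^k$ for $1\le i,j\le m$. Then $$\frac{\det(M)}{t^{\binom{m}{2}}}=\sum_{k=0}^{m}\binom{x-m-1+k}{k}\binom{y-m-1+k}{k}t^k.$$
   Context: For a polynomial (or integer) $z$ and an integer $k\ge0$, $\binom{z}{k}=\frac{z(z-1)\cdots(z-k+1)}{k!}$. *)

(* Defs.v *)
From HB Require Import structures.
From mathcomp Require Import all_boot all_order all_algebra.
From mathcomp Require Import mpoly.
Set Implicit Arguments. Unset Strict Implicit. Unset Printing Implicit Defensive.
Import GRing.Theory.
Local Open Scope ring_scope.

(* Q[x,y,t] is {mpoly rat[3]}, with x = 'X_0, y = 'X_1, t = 'X_2. *)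
Definition QXYT := {mpoly rat[3]}.

Definition binomp (z : QXYT) (k : nat) : QXYT :=
  (k`!%:R : rat)^-1 *: \prod_(i < k) (z - i%:R).

Definition varx : QXYT := 'X_(0 : 'I_3).
Definition vary : QXYT := 'X_(1 : 'I_3).
Definition vart : QXYT := 'X_(2 : 'I_3).

(* Main.v *)
Require Import Defs.
From HB Require Import structures.
From mathcomp Require Import all_boot all_order all_algebra.
From mathcomp Require Import mpoly.
From mathcomp Require Import ring zify.
Import GRing.Theory Num.Theory.
Local Open Scope ring_scope.

Definition ff (z : QXYT) (k : nat) : QXYT := \prod_(i < k) (z - i%:R).

Lemma ffS z k : ff z k.+1 = ff z k * (z - k%:R).
Proof. by rewrite /ff big_ord_recr. Qed.

Lemma ff0 z : ff z 0 = 1.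
Proof. by rewrite /ff big_ord0. Qed.

Lemma ff_vdm a b n :
  ff (a + b) n = \sum_(i < n.+1) (ff a (n - i) * ff b i) *+ 'C(n, i).
Proof.
elim: n => [|n IHn]; first by rewrite big_ord1 !ff0 mulr1.
rewrite ffS IHn big_distrl /=.
have E : forall i : 'I_n.+1, (ff a (n - i) * ff b i) *+ 'C(n, i) * (a + b - n%:R)
   = (ff a (n - i).+1 * ff b i) *+ 'C(n, i) + (ff a (n - i) * ff b i.+1) *+ 'C(n, i).
  move=> i; rewrite -mulrnDl mulrnAl; congr (_ *+ _).
  have hi : (i <= n)%N by rewrite -ltnS.
  rewrite !ffS; have -> : a + b - n%:R = (a - (n - i)%:R) + (b - i%:R).
    by rewrite natrB //; ring.
  by rewrite mulrDr !mulrA [ff a (n - i) * ff b i * _]mulrAC.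
rewrite (eq_bigr _ (fun i _ => E i)) big_split /=.
rewrite big_ord_recl subn0 bin0 /=.
have b0 : forall i, bump 0 i = i.+1 by [].
rewrite [RHS]big_ord_recl subn0 bin0.
rewrite -!addrA; congr (_ + _).
under [RHS]eq_bigr => i _ do rewrite lift0 subSS binS mulrnDr.
under eq_bigr => i _ do rewrite b0.
rewrite big_split /=; congr (_ + _).
rewrite [RHS]big_ord_recr /= bin_small // mulr0n addr0.
by apply: eq_bigr => i _; rewrite subnSK.
Qed.

Lemma binompE z k : binomp z k = (k`!%:R : rat)^-1 *: ff z k.
Proof. by []. Qed.

Lemma fact_neq0 k : (k`!%:R : rat) != 0.
Proof. by rewrite pnatr_eq0 -lt0n fact_gt0. Qed.

Lemma binomp_vdm a b n :
  binomp (a + b) n = \sum_(i < n.+1) binomp a (n - i) * binomp b i.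
Proof.
rewrite binompE ff_vdm scaler_sumr; apply: eq_bigr => i _.
have hi : (i <= n)%N by rewrite -ltnS.
rewrite !binompE -scalerAl -scalerAr scalerA -scaler_nat scalerA; congr (_ *: _).
have h := bin_fact hi.
have h' : ('C(n, i)%:R : rat) * (i`!%:R * (n - i)`!%:R) = n`!%:R by rewrite -!natrM h.
have := fact_neq0 n; have := fact_neq0 i; have := fact_neq0 (n - i).
rewrite -h' => h1 h2 h3.
move: h3; rewrite mulf_eq0 negb_or => /andP[hc _].
by field; rewrite hc h1 h2.
Qed.

Lemma sum_ext (F : nat -> QXYT) n1 n2 : (n1 <= n2)%N ->
  (forall i, (n1 <= i)%N -> (i < n2)%N -> F i = 0) ->
  \sum_(i < n1) F i = \sum_(i < n2) F i.
Proof.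
move=> le F0; rewrite -!(big_mkord xpredT) [RHS](@big_cat_nat _ _ _ n1) //=.
rewrite [X in _ = _ + X]big1_seq ?addr0 // => i /andP[_].
by rewrite mem_index_iota => /andP[h1 h2]; apply: F0.
Qed.

Lemma sum_window (F : nat -> QXYT) n s len : (s + len <= n)%N ->
  (forall l, (l < s)%N -> F l = 0) -> (forall l, (s + len <= l)%N -> F l = 0) ->
  \sum_(l < n) F l = \sum_(i < len) F (i + s)%N.
Proof.
move=> le F1 F2.
rewrite -(@sum_ext F _ _ le); last by move=> i h _; apply: F2.
rewrite -(big_mkord xpredT) (@big_cat_nat _ _ _ s) ?leq_addr //=.
rewrite big1_seq ?add0r; last first.
  by move=> i /andP[_]; rewrite mem_index_iota => /andP[_ h]; apply: F1.
rewrite -{1}[s]add0n big_addn addKn.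
by rewrite big_mkord.
Qed.

Lemma binomp0 z : binomp z 0 = 1.
Proof. by rewrite binompE ff0 /= invr1 scale1r. Qed.

Lemma ff_nat (n k : nat) : ff n%:R k = (n ^_ k)%:R.
Proof.
elim: k => [|k IH]; first by rewrite ff0 ffactn0.
rewrite ffS IH ffactnSr.
case: (leqP k n) => hk; first by rewrite natrM natrB.
by rewrite ffact_small // mul0r.
Qed.

Lemma natrZ (c : nat) : (c%:R : QXYT) = (c%:R : rat) *: 1.
Proof. by rewrite scaler_nat. Qed.

Lemma binomp_nat (n k : nat) : binomp n%:R k = 'C(n, k)%:R.
Proof.
rewrite binompE ff_nat -bin_ffact natrM !natrZ -scalerAl -scalerAr mulr1 !scalerA.
congr (_ *: _); have := fact_neq0 k => h; by field.
Qed.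

Lemma binomp_zero k : binomp 0 k = (k == 0%N)%:R.
Proof.
case: k => [|k]; first by rewrite binomp0.
by rewrite binompE /ff big_ord_recl subr0 mul0r scaler0.
Qed.

Lemma ff_neg a j : ff (- a) j = (-1) ^+ j * ff (a + j%:R - 1) j.
Proof.
rewrite /ff (reindex_inj rev_ord_inj) /=.
have -> : \prod_(i < j) (- a - (rev_ord i)%:R) = \prod_(i < j) - (a + (rev_ord i)%:R).
  by apply: eq_bigr => i _; rewrite opprD.
rewrite prodrN card_ord; congr (_ * _).
apply: eq_bigr => i _.
rewrite /= natrB // -natr1; ring.
Qed.

Definition Cm n (a : QXYT) : 'M[QXYT]_n :=
  \matrix_(s, k) (if (s <= k)%N then binomp a (k - s) else 0).

Lemma Cm_inv n a : Cm n a *m Cm n (-a) = 1%:M.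
Proof.
apply/matrixP => s k; rewrite !mxE.
pose G l := (if (s <= l)%N then binomp a (l - s) else 0) *
            (if (l <= k)%N then binomp (-a) (k - l) else 0).
transitivity (\sum_(l < n) G l); first by apply: eq_bigr => l _; rewrite !mxE.
have hk := ltn_ord k.
case: (leqP s k) => hsk.
  rewrite (@sum_window G n s (k - s).+1); last first.
  - by move=> l hl; rewrite /G; (have -> : (l <= k)%N = false by lia); rewrite mulr0.
  - by move=> l hl; rewrite /G; (have -> : (s <= l)%N = false by lia); rewrite mul0r.
  - lia.
  have -> : (s == k) = (k - s == 0)%N by rewrite -val_eqE /=; apply/idP/idP => /eqP h; apply/eqP; lia.
  rewrite -binomp_zero -[X in binomp X _](addNr a) binomp_vdm.
  apply: eq_bigr => i _; rewrite /G.
  have hi := ltn_ord i.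
  have -> : (s <= i + s)%N by lia.
  have -> : (i + s <= k)%N by lia.
  rewrite addnK mulrC; congr (_ * _); congr (binomp _ _); lia.
rewrite big1; last first.
  move=> l _; rewrite /G; case: (leqP s l) => h1; last by rewrite mul0r.
  by (have -> : (l <= k)%N = false by lia); rewrite mulr0.
have -> : (s == k) = false by rewrite -val_eqE /=; apply/eqP; lia.
by [].
Qed.

Lemma det_Cm n a : \det (Cm n a) = 1.
Proof.
rewrite -det_tr det_trig.
  by rewrite big1 // => i _; rewrite !mxE leqnn subnn binomp0.
apply/forallP => i; apply/forallP => j; apply/implyP => h.
by rewrite !mxE leqNgt h.
Qed.

Lemma vart_neq0 : vart != 0.
Proof.
apply/eqP => h.
have := congr1 (fun p : QXYT => p.@[fun _ : 'I_3 => (1 : rat)]) h.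
by rewrite /= /vart mevalXU meval0 => /eqP; rewrite oner_eq0.
Qed.

Lemma binomp_neg a j : binomp (- a) j = (-1) ^+ j * binomp (a + j%:R - 1) j.
Proof. by rewrite !binompE ff_neg scalerAr. Qed.

Definition Dg m : 'M[QXYT]_(m.+1) := diag_mx (\row_(k < m.+1) vart ^+ k).
Definition Ds m : 'M[QXYT]_(m.+1) := diag_mx (\row_(k < m.+1) vart ^+ ('C(m.+1, 2) - k)).
Definition Nm m ax ay := Cm m.+1 ax *m Dg m *m (Cm m.+1 ay)^T.
Definition Qm m ax ay := (Cm m.+1 (-ay))^T *m Ds m *m Cm m.+1 (-ax).

Lemma NQ m ax ay : Nm m ax ay *m Qm m ax ay = (vart ^+ 'C(m.+1, 2))%:M.
Proof.
rewrite /Nm /Qm !mulmxA.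
rewrite -[Cm m.+1 ax *m Dg m *m (Cm m.+1 ay)^T *m (Cm m.+1 (- ay))^T]mulmxA -trmx_mul.
have -> : Cm m.+1 (- ay) *m Cm m.+1 ay = 1%:M by have := Cm_inv m.+1 (-ay); rewrite opprK.
rewrite trmx1 mulmx1 -[Cm m.+1 ax *m Dg m *m Ds m]mulmxA /Dg /Ds mulmx_diag.
have -> : (\row_j ((\row_(k < m.+1) vart ^+ k) 0 j * (\row_(k < m.+1) vart ^+ ('C(m.+1, 2) - k)) 0 j))
   = const_mx (vart ^+ 'C(m.+1, 2)).
  apply/matrixP => i j; rewrite !mxE -exprD subnKC //.
  have hj := ltn_ord j; rewrite binS bin1; lia.
rewrite diag_const_mx mul_mx_scalar -scalemxAl Cm_inv.
by rewrite scalemx1.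
Qed.

Lemma detN m ax ay : \det (Nm m ax ay) = vart ^+ 'C(m.+1, 2).
Proof.
rewrite /Nm !det_mulmx det_tr !det_Cm mul1r mulr1 /Dg det_diag.
under eq_bigr => i _ do rewrite mxE.
by rewrite prodrXr -(big_mkord xpredT (fun i => i)) bin2_sum.
Qed.

Lemma adjN m ax ay : \adj (Nm m ax ay) = Qm m ax ay.
Proof.
have h1 := mul_adj_mx (Nm m ax ay); rewrite detN in h1.
have := esym (mulmxA (\adj (Nm m ax ay)) (Nm m ax ay) (Qm m ax ay)).
rewrite h1 NQ mul_scalar_mx mul_mx_scalar => /matrixP E.
apply/matrixP => i j; have := E i j; rewrite !mxE => /mulfI -> //.
by rewrite expf_neq0 // vart_neq0.
Qed.

Definition Pm m : 'M[QXYT]_m := \matrix_(q, s) ('C(q, s)%:R).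
Definition Gm m : 'M[QXYT]_m := row_perm (perm.perm (@rev_ord_inj m)) (Pm m).
Definition Am m a : 'M[QXYT]_(m, m.+1) := \matrix_(p, k) Cm m.+1 a (lift ord_max p) k.

Lemma detG2 m : \det (Gm m) * \det (Gm m) = 1.
Proof.
rewrite /Gm row_permE det_mulmx det_perm.
have -> : \det (Pm m) = 1.
  rewrite det_trig; first by rewrite big1 // => i _; rewrite mxE binn.
  apply/forallP => i; apply/forallP => j; apply/implyP => h.
  by rewrite mxE bin_small.
by rewrite mulr1 -expr2 sqrr_sign.
Qed.

Lemma GA m a : Gm m *m Am m a = \matrix_(p, k) binomp (a + (m - p.+1)%:R) k.
Proof.
apply/matrixP => p k; rewrite !mxE.
have bm : forall s : 'I_m, bump m s = s by move=> s; rewrite /bump leqNgt ltn_ord.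
under eq_bigr => s _ do rewrite !mxE perm.permE /= bm.
pose nn := (m - p.+1)%N.
pose H l := binomp nn%:R l * (if (l <= k)%N then binomp a (k - l) else 0).
transitivity (\sum_(l < m) H l); first by apply: eq_bigr => s _; rewrite /H binomp_nat.
have hp := ltn_ord p; have hk := ltn_ord k.
rewrite (@sum_ext H m (m + k.+1) (leq_addr _ _)); last first.
  by move=> l hl _; rewrite /H binomp_nat bin_small ?mul0r // /nn; lia.
rewrite binomp_vdm -/nn.
have -> : \sum_(i < k.+1) binomp a (k - i) * binomp nn%:R i = \sum_(i < k.+1) H i.
  apply: eq_bigr => i _; rewrite /H.
  have -> : (i <= k)%N by rewrite -ltnS.
  by rewrite mulrC.
rewrite (@sum_ext H k.+1 (m + k.+1) (leq_addl _ _)) //.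
by move=> l hl _; rewrite /H; (have -> : (l <= k)%N = false by lia); rewrite mulr0.
Qed.

Theorem lemma6 (m : nat) : (0 < m)%N ->
  \det (\matrix_(i < m, j < m)
          \sum_(k < m.+1) binomp (varx - (i.+1)%:R) k * binomp (vary - (j.+1)%:R) k
                            * vart ^+ k)
  = vart ^+ 'C(m, 2) *
    \sum_(k < m.+1) binomp (varx - (m.+1)%:R + k%:R) k
                    * binomp (vary - (m.+1)%:R + k%:R) k * vart ^+ k.
Proof.
move=> _.
set ax := varx - m%:R; set ay := vary - m%:R.
have EM : (\matrix_(i < m, j < m)
          \sum_(k < m.+1) binomp (varx - (i.+1)%:R) k * binomp (vary - (j.+1)%:R) k
                            * vart ^+ k)
   = Gm m *m (Am m ax *m Dg m *m (Am m ay)^T) *m (Gm m)^T.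
  rewrite !mulmxA -[Gm m *m Am m ax *m Dg m *m (Am m ay)^T *m (Gm m)^T]mulmxA -trmx_mul.
  rewrite !GA /Dg mul_mx_diag.
  apply/matrixP => i j; rewrite !mxE; apply: eq_bigr => k _; rewrite !mxE.
  have hi := ltn_ord i; have hj := ltn_ord j.
  have -> : ax + (m - i.+1)%:R = varx - i.+1%:R by rewrite /ax natrB //; ring.
  have -> : ay + (m - j.+1)%:R = vary - j.+1%:R by rewrite /ay natrB //; ring.
  by rewrite mulrAC.
rewrite EM !det_mulmx det_tr mulrAC detG2 mul1r.
have Einner : Am m ax *m Dg m *m (Am m ay)^T = row' ord_max (col' ord_max (Nm m ax ay)).
  apply/matrixP => p q; rewrite /Nm /Dg !mul_mx_diag !mxE; apply: eq_bigr => k _.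
  by rewrite !mxE.
rewrite Einner.
have -> : \det (row' ord_max (col' ord_max (Nm m ax ay))) = \adj (Nm m ax ay) ord_max ord_max.
  rewrite mxE /cofactor /= -signr_odd oddD addbb expr0 mul1r //.
rewrite adjN /Qm /Ds mul_mx_diag !mxE.
rewrite (reindex_inj rev_ord_inj) mulr_sumr.
apply: eq_bigr => k _; rewrite !mxE.
have hk := ltn_ord k.
have rk : nat_of_ord (rev_ord k) = (m - k)%N by rewrite /= subSS.
have om : nat_of_ord (@ord_max m) = m by [].
have hk2 : (k <= m)%N by rewrite -ltnS.
rewrite rk om leq_subr subKn //.
have -> : ('C(m.+1, 2) - (m - k))%N = ('C(m, 2) + k)%N by rewrite binS bin1; lia.
rewrite !binomp_neg exprD.
have -> : ay + k%:R - 1 = vary - m.+1%:R + k%:R by rewrite /ay -natr1; ring.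
have -> : ax + k%:R - 1 = varx - m.+1%:R + k%:R by rewrite /ax -natr1; ring.
have sg : (-1) ^+ k * (-1) ^+ k = 1 :> QXYT by rewrite -expr2 sqrr_sign.
transitivity ((-1) ^+ k * (-1) ^+ k * (vart ^+ 'C(m, 2) * (binomp (varx - m.+1%:R + k%:R) k *
      binomp (vary - m.+1%:R + k%:R) k * vart ^+ k))); first ring.
by rewrite sg mul1r.
Qed.
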